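(* For every nonempty team $X$ on a set $\{p_1,\dots,p_n\}$ of propositional variables, the formula $\Theta_X=\bigotimes_{v\in X}(p_1^{v(p_1)}\wedge\dots\wedge p_n^{v(p_n)})$ is $\mathcal{F}$-projective in $\mathbf{PD}$, where $\mathcal F$ is the class of all flat substitutions of $\mathbf{PD}$.
   Context: Here $p^1:=p$, $p^0:=\neg p$, and a team on $V$ is a set of functions $V\to\{0,1\}$. A valuation is a function from the set Prop of propositional variables to $\{0,1\}$; a team is a set of valuations. Formulas of extended propositional dependence logic $\mathbf{PD}$: $\phi::=p\mid\bot\mid\top\mid\,=\!(\alpha_1,\dots,\alpha_k,\beta)\mid\neg\phi\mid\phi\wedge\phi\mid\phi\otimes\phi$ with $\alpha_i,\beta$ flat. Satisfaction on a team $X$: $X\models p$ iff $v(p)=1$ for all $v\in X$; $X\models\bot$ iff $X=\emptyset$; $X\models\top$ always; $\wedge$ conjunction; $X\models\phi\otimes\psi$ iff $X=Y\cup Z$ with $Y\models\phi$, $Z\models\psi$; $X\models\neg\phi$ iff $\{v\}\not\models\phi$ for all $v\in X$; $X\models\,=\!(\vec\alpha,\beta)$ iff for all $v,v'\in X$, if $\{v\}\models\alpha_i\Leftrightarrow\{v'\}\models\alpha_i$ for all $i$, then $\{v\}\models\beta\Leftrightarrow\{v'\}\models\beta$. $\phi$ is flat if for all teams $X$: $X\models\phi$ iff $\{v\}\models\phi$ for all $v\in X$. For finite $\Gamma$, $\Gamma\vdash_{\mathbf{PD}}\phi$ iff all formulas are $\mathbf{PD}$-formulas and every team satisfying all of $\Gamma$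 satisfies $\phi$. A substitution is a map on $\mathbf{PD}$-formulas commuting with all connectives and atoms; it is flat if each $\sigma(p)$ is flat. For a set $\mathcal S$ of substitutions, $\phi$ is $\mathcal S$-projective in $\mathbf{PD}$ if there is $\sigma\in\mathcal S$ with $\vdash_{\mathbf{PD}}\sigma(\phi)$, and $\phi,\sigma(p)\vdash_{\mathbf{PD}}p$ and $\phi,p\vdash_{\mathbf{PD}}\sigma(p)$ for all propositional variables $p$. *)

(* Defs.v *)
From Stdlib Require List.
From mathcomp Require Import all_boot.
Set Implicit Arguments. Unset Strict Implicit. Unset Printing Implicit Defensive.

Inductive form : Type :=
  | Var : nat -> form
  | Bot : form
  | Top : form
  | Dep : list form -> form -> form
  | Neg : form -> form
  | And : form -> form -> form
  | Tensor : form -> form -> form.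

Definition valuation := nat -> bool.
Definition team := valuation -> Prop.
Definition single (v : valuation) : team := fun w => w = v.

Fixpoint sat (f : form) (X : team) {struct f} : Prop :=
  match f with
  | Var p => forall v, X v -> v p = true
  | Bot => forall v, ~ X v
  | Top => True
  | Dep a b =>
      forall v w, X v -> X w ->
        (fix agree (l : list form) : Prop :=
           match l with
           | nil => True
           | cons g l' => (sat g (single v) <-> sat g (single w)) /\ agree l'
           end) a ->
        (sat b (single v) <-> sat b (single w))
  | Neg g => forall v, X v -> ~ sat g (single v)
  | And g h => sat g X /\ sat h X
  | Tensor g h => exists Y Z : team,
      (forall v, X v <-> (Y v \/ Z v)) /\ sat g Y /\ sat h Z
  end.

Definition flat (f : form) : Prop :=
  forall X : team, sat f X <-> (forall v, X v -> sat f (single v)).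

Fixpoint isPD (f : form) : Prop :=
  match f with
  | Var _ | Bot | Top => True
  | Dep a b =>
      (fix allPD (l : list form) : Prop :=
         match l with
         | nil => True
         | cons g l' => (flat g /\ isPD g) /\ allPD l'
         end) a /\ (flat b /\ isPD b)
  | Neg g => isPD g
  | And g h | Tensor g h => isPD g /\ isPD h
  end.

Definition entails (Gamma : list form) (phi : form) : Prop :=
  (forall g, List.In g Gamma -> isPD g) /\ isPD phi /\
  forall X : team, (forall g, List.In g Gamma -> sat g X) -> sat phi X.

Fixpoint subst (s : nat -> form) (f : form) : form :=
  match f with
  | Var p => s p
  | Bot => Bot
  | Top => Top
  | Dep a b => Dep (List.map (subst s) a) (subst s b)
  | Neg g => Neg (subst s g)
  | And g h => And (subst s g) (subst s h)
  | Tensor g h => Tensor (subst s g) (subst s h)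
  end.

Definition flat_subst (s : nat -> form) : Prop :=
  forall p, isPD (s p) /\ flat (s p).

Definition flat_projective (phi : form) : Prop :=
  exists s : nat -> form, flat_subst s /\
    entails nil (subst s phi) /\
    (forall p : nat, entails (phi :: subst s (Var p) :: nil) (Var p)) /\
    (forall p : nat, entails (phi :: Var p :: nil) (subst s (Var p))).

(* iterated conjunction / tensor, without trailing units *)
Fixpoint bigAnd (l : list form) : form :=
  match l with
  | nil => Top
  | cons f nil => f
  | cons f l' => And f (bigAnd l')
  end.

Fixpoint bigTensor (l : list form) : form :=
  match l with
  | nil => Bot
  | cons f nil => f
  | cons f l' => Tensor f (bigTensor l')
  end.

Definition lit (p : nat) (b : bool) : form := if b then Var p else Neg (Var p).

Definition Theta (n : nat) (ps : 'I_n -> nat) (X : {set {ffun 'I_n -> bool}}) : form :=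
  bigTensor [seq bigAnd [seq lit (ps i) (v i) | i <- enum 'I_n] | v : {ffun 'I_n -> bool} <- enum X].

(* Main.v *)
Require Import Defs.
From mathcomp Require Import all_boot.
From Stdlib Require Import Classical.

Fixpoint nodep (f : form) : Prop :=
  match f with
  | Dep _ _ => False
  | Neg g => nodep g
  | And g h | Tensor g h => nodep g /\ nodep h
  | _ => True
  end.

Fixpoint ev (f : form) (V : nat -> Prop) : Prop :=
  match f with
  | Var p => V p
  | Bot => False
  | Top => True
  | Dep _ _ => True
  | Neg g => ~ ev g V
  | And g h => ev g V /\ ev h V
  | Tensor g h => ev g V \/ ev h V
  end.

Definition vl (w : valuation) : nat -> Prop := fun p => w p = true.

Lemma sat_ev {f} : nodep f -> forall X, sat f X <-> (forall w, X w -> ev f (vl w)).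
Proof.
elim: f => //=.
- move=> g IH Hg X; split.
  + move=> H w Xw Hev; apply: (H w Xw); apply/(IH Hg) => u ->; exact: Hev.
  + move=> H w Xw Hs; apply: (H w Xw); move/(IH Hg): Hs; apply; done.
- move=> g IHg h IHh [Hg Hh] X; rewrite (IHg Hg) (IHh Hh); split.
  + by move=> [A B] w Xw; split; [apply: A | apply: B].
  + by move=> H; split => w Xw; case: (H w Xw).
- move=> g IHg h IHh [Hg Hh] X; split.
  + move=> [Y [Z [HU [HY HZ]]]] w Xw.
    move: (IHg Hg Y) (IHh Hh Z) => [A _] [B _].
    case: (proj1 (HU w) Xw) => HW; [left; exact: A HY w HW | right; exact: B HZ w HW].
  + move=> H.
    exists (fun w => X w /\ ev g (vl w)), (fun w => X w /\ ~ ev g (vl w)).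
    split; [|split].
    * move=> w; split; first by move=> Xw; case: (classic (ev g (vl w))); [left|right].
      by case=> -[].
    * by apply/(IHg Hg) => w [].
    * apply/(IHh Hh) => w [Xw Hn]; by case: (H w Xw).
Qed.

Lemma nodep_isPD f : nodep f -> isPD f.
Proof. elim: f => //=; intuition. Qed.

Lemma nodep_flat f : nodep f -> flat f.
Proof.
move=> Hf X; rewrite (sat_ev Hf); split.
- move=> H v Xv; apply/(sat_ev Hf) => w ->; exact: H.
- move=> H v Xv; move: (H v Xv); move/(sat_ev Hf); apply; done.
Qed.

Lemma ev_ext f V V' : (forall p, V p <-> V' p) -> (ev f V <-> ev f V').
Proof.
move=> HV; elim: f => //=.
- move=> g IH; by rewrite IH.
- move=> g IHg h IHh; by rewrite IHg IHh.
- move=> g IHg h IHh; by rewrite IHg IHh.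
Qed.

Lemma ev_subst s f V : ev (subst s f) V <-> ev f (fun p => ev (s p) V).
Proof.
elim: f => //=.
- move=> g IH; by rewrite IH.
- move=> g IHg h IHh; by rewrite IHg IHh.
- move=> g IHg h IHh; by rewrite IHg IHh.
Qed.

Lemma nodep_subst s f : (forall p, nodep (s p)) -> nodep f -> nodep (subst s f).
Proof. move=> Hs; elim: f => //=; intuition. Qed.

Lemma ev_bigTensor (T : eqType) (F : T -> form) (s : seq T) V :
  ev (bigTensor (map F s)) V <-> exists2 x, x \in s & ev (F x) V.
Proof.
elim: s => [|x s IH] /=; first by split => // -[].
case: s IH => [|y s] IH /=.
- split; first by move=> H; exists x => //; rewrite inE.
  by case=> z; rewrite inE => /eqP ->.
- rewrite IH; split.
  + case=> [H|[z Hz H]]; [exists x => //; rewrite inE eqxx //|exists z => //; rewrite inE Hz orbT //].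
  + case=> z; rewrite inE => /orP [/eqP ->|Hz] H; [by left|right; by exists z].
Qed.

Lemma ev_bigAnd (T : eqType) (F : T -> form) (s : seq T) V :
  ev (bigAnd (map F s)) V <-> forall x, x \in s -> ev (F x) V.
Proof.
elim: s => [|x s IH] /=; first by split.
case: s IH => [|y s] IH /=.
- split; last by move=> H; apply: H; rewrite inE.
  by move=> H z; rewrite inE => /eqP ->.
- rewrite IH; split.
  + move=> [A B] z; rewrite inE => /orP [/eqP ->|Hz] //; exact: B.
  + move=> H; split; first by apply: H; rewrite inE eqxx.
    move=> z Hz; apply: H; by rewrite inE Hz orbT.
Qed.

Lemma nodep_bigTensor (T : eqType) (F : T -> form) (s : seq T) :
  (forall x, nodep (F x)) -> nodep (bigTensor (map F s)).
Proof. move=> H; elim: s => [|x s IH] //=; case: s IH => //= y s IH; auto. Qed.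

Lemma nodep_bigAnd (T : eqType) (F : T -> form) (s : seq T) :
  (forall x, nodep (F x)) -> nodep (bigAnd (map F s)).
Proof. move=> H; elim: s => [|x s IH] //=; case: s IH => //= y s IH; auto. Qed.

Lemma nodep_lit p b : nodep (lit p b).
Proof. by case: b. Qed.

Lemma ev_lit p b V : ev (lit p b) V <-> (if b then V p else ~ V p).
Proof. by case: b. Qed.

Lemma nodep_Theta n (ps : 'I_n -> nat) X : nodep (Theta ps X).
Proof. apply: nodep_bigTensor => v; apply: nodep_bigAnd => i; exact: nodep_lit. Qed.

Lemma ev_Theta n (ps : 'I_n -> nat) X V :
  ev (Theta ps X) V <-> exists2 v, v \in X & forall i, ev (lit (ps i) (v i)) V.
Proof.
rewrite /Theta ev_bigTensor; split.
- case=> v; rewrite mem_enum => Hv /ev_bigAnd H; exists v => // i; apply: H; by rewrite mem_enum.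
- case=> v Hv H; exists v; first by rewrite mem_enum.
  by apply/ev_bigAnd => i _.
Qed.

Theorem lemma4p5 (n : nat) (ps : 'I_n -> nat) (X : {set {ffun 'I_n -> bool}}) :
  injective ps -> X != set0 -> flat_projective (Theta ps X).
Proof.
move=> inj /set0Pn [v0 Hv0].
set Th := Theta ps X.
pose s p := match [pick i | ps i == p] with
            | Some i => Tensor (And Th (Var p)) (And (Neg Th) (if v0 i then Top else Bot))
            | None => Var p end.
have ndTh : nodep Th by exact: nodep_Theta.
have nds : forall p, nodep (s p).
  by move=> p; rewrite /s; case: pickP => [i _|_] //=; case: (v0 i).
have HA : forall V, ev Th V -> forall p, ev (s p) V <-> V p.
  move=> V HT p; rewrite /s; case: pickP => [i _|_] //=.
  split; first by case=> -[] // _ [].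
  by move=> Hp; left.
have HB : forall V, ev Th (fun p => ev (s p) V).
  move=> V; case: (classic (ev Th V)) => HT.
  - exact: (proj2 (@ev_ext Th _ _ (HA V HT)) HT).
  - apply/ev_Theta; exists v0 => // i; apply/ev_lit.
    have E : ev (s (ps i)) V <-> v0 i = true.
      rewrite /s; case: pickP => [j /eqP /inj -> |/(_ i)]; last by rewrite eqxx.
      case: (v0 i) => /=; split => //.
      - by move=> _; right.
      - by case=> [[A _]|[_ []]].
    case: (v0 i) E => E; first by apply/E.
    by move/E.
exists s; split; first by move=> p; split; [apply: nodep_isPD | apply: nodep_flat].
split; [|split].
- split; first by [].
  split; first by apply: nodep_isPD; apply: nodep_subst.
  move=> Y _; apply: (proj2 (sat_ev (@nodep_subst s Th nds ndTh) Y)) => w _.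
  apply/ev_subst; exact: HB.
- move=> p; split.
    by move=> g /= [<-|[<-|[]]]; apply: nodep_isPD.
  split; first by [].
  move=> Y H; have H1 := H _ (or_introl erefl); have H2 := H _ (or_intror (or_introl erefl)).
  move/(sat_ev ndTh): H1 => H1; move/(sat_ev (nds p)): H2 => H2.
  move=> w Yw; apply/(HA _ (H1 w Yw)); exact: H2.
- move=> p; split.
    by move=> g /= [<-|[<-|[]]]; apply: nodep_isPD.
  split; first exact: nodep_isPD (nds p).
  move=> Y H; have H1 := H _ (or_introl erefl); have H2 := H _ (or_intror (or_introl erefl)).
  move/(sat_ev ndTh): H1 => H1; move: H2 => /= H2.
  apply: (proj2 (sat_ev (nds p) Y)) => w Yw; apply/(HA _ (H1 w Yw)); exact: H2.
Qed.
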